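(* Let $a,b,c,f\in C^\infty(\mathbb R)$, $K_1=uu_1$, $K_3=a u_3+b u_2u_1+c u_1^3$, $Q_1=fu_1$ and $Q_3=af'u_3+(bf'+2af'')u_2u_1+(cf'+\tfrac12bf''+\tfrac12af''')u_1^3$. Define $Q_5=h_1u_5+h_2u_4u_1+h_3u_3u_2+h_4u_3u_1^2+h_5u_2^2u_1+h_6u_2u_1^3+h_7u_1^5$ with $h_1=\tfrac35a^2f''$, $h_2=abf''+\tfrac85aa'f''+\tfrac95a^2f'''$, $h_3=2abf''+2aa'f''+3a^2f'''$, $h_4=\tfrac25b^2f''+\tfrac{11}5acf''+ba'f''+\tfrac{13}{10}ab'f''+\tfrac75af''a''+\tfrac52abf'''+\tfrac{37}{10}aa'f'''+\tfrac{23}{10}a^2f^{(4)}$, $h_5=\tfrac1{10}\big(8b^2f''+5b(a'f''+7af''')+a(14cf''+26b'f''+13f''a''+44a'f'''+31af^{(4)})\big)$, $h_6=\tfrac1{10}\big(9b^2f'''+b(18cf''+9b'f''+4f''a''+15a'f'''+25af^{(4)})+2(4ca'f''+10ac'f''+7af''b''+16acf'''+14ab'f'''+12aa''f'''+2af''a'''+18aa'f^{(4)}+8a^2f^{(5)})\big)$, $h_7=\tfrac18\big(4c^2f''+b^2f^{(4)}+2c(b'f''+2bf'''+a'f'''+2af^{(4)})+b(2c'f''+f''b''+2b'f'''+a''f'''+2a'f^{(4)}+2af^{(5)})+a(2f''c''+4c'f'''+3b''f'''+f'''a'''+f''b'''+3b'f^{(4)}+3a''f^{(4)}+3a'f^{(5)}+af^{(6)})\big)$.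 Then $K_1'[Q_5]-Q_5'[K_1]=Q_3'[K_3]-K_3'[Q_3]$. Hence $u_\tau=Q_1+\hbar^2Q_3+\hbar^4Q_5$ commutes with $u_t=K_1+\hbar^2K_3$ up to terms of order $\hbar^6$.
   Context: $u_k=\partial_x^ku$; $\mathcal D=C^\infty(\mathbb R)[u_1,u_2,\dots]$ with coefficients smooth in $u$, graded by $\deg u_k=k$. Total derivative $D=\sum_{r\ge0}u_{r+1}\partial/\partial u_r$ ($u_0=u$); Fréchet derivative $P'[V]=\sum_{r\ge0}\frac{\partial P}{\partial u_r}D^rV$. Primes and $^{(k)}$ on $a,b,c,f$ denote derivatives with respect to $u$; $\hbar$ is a formal parameter. *)

(* Defs.v *)
From Stdlib Require Import Reals Lra.
From Coquelicot Require Import Coquelicot.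
Open Scope R_scope.

(** Jet space: a point is a sequence j with j k = u_k (u_0 = u). *)
Definition jet := nat -> R.

(** A differential function: a real function on jet space (elements of
    D = C^oo(R)[u_1,u_2,...] are represented by the functions they define). *)
Definition dfun := jet -> R.

Definition smooth (g : R -> R) : Prop :=
  forall (k : nat) (x : R), ex_derive (Derive_n g k) x.

Notation "g ^( k )" := (Derive_n g k) (at level 2, format "g ^( k )").

Fixpoint sumN (n : nat) (F : nat -> R) : R :=
  match n with
  | O => 0
  | S m => sumN m F + F m
  end.

Definition upd (j : jet) (r : nat) (t : R) : jet :=
  fun k => if Nat.eqb k r then t else j k.

Definition pd (r : nat) (P : dfun) : dfun :=
  fun j => Derive (fun t => P (upd j r t)) (j r).

(** Total derivative D = sum_{r >= 0} u_{r+1} d/du_r, with the sum truncated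
    at r < N (exact on functions depending only on u_0..u_{N-1}). *)
Definition Dtot (N : nat) (P : dfun) : dfun :=
  fun j => sumN N (fun r => j (S r) * pd r P j).

Fixpoint Diter (N r : nat) (V : dfun) : dfun :=
  match r with
  | O => V
  | S m => Dtot N (Diter N m V)
  end.

Definition frechet (N : nat) (P V : dfun) : dfun :=
  fun j => sumN N (fun r => pd r P j * Diter N r V j).

Definition bracket (N : nat) (P V : dfun) : dfun :=
  fun j => frechet N P V j - frechet N V P j.

Section Flows.
Variables a b c f : R -> R.

Definition K1 : dfun := fun j => j 0%nat * j 1%nat.
Definition K3 : dfun := fun j =>
  a (j 0%nat) * j 3%nat + b (j 0%nat) * j 2%nat * j 1%nat + c (j 0%nat) * (j 1%nat) ^ 3.
Definition Q1 : dfun := fun j => f (j 0%nat) * j 1%nat.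
Definition Q3 : dfun := fun j =>
  let x := j 0%nat in
  a x * f^(1) x * j 3%nat
  + (b x * f^(1) x + 2 * a x * f^(2) x) * j 2%nat * j 1%nat
  + (c x * f^(1) x + /2 * b x * f^(2) x + /2 * a x * f^(3) x) * (j 1%nat) ^ 3.

Definition h1 (x : R) : R := 3/5 * (a x)^2 * f^(2) x.
Definition h2 (x : R) : R :=
  a x * b x * f^(2) x + 8/5 * a x * a^(1) x * f^(2) x + 9/5 * (a x)^2 * f^(3) x.
Definition h3 (x : R) : R :=
  2 * a x * b x * f^(2) x + 2 * a x * a^(1) x * f^(2) x + 3 * (a x)^2 * f^(3) x.
Definition h4 (x : R) : R :=
  2/5 * (b x)^2 * f^(2) x + 11/5 * a x * c x * f^(2) x + b x * a^(1) x * f^(2) x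
  + 13/10 * a x * b^(1) x * f^(2) x + 7/5 * a x * f^(2) x * a^(2) x
  + 5/2 * a x * b x * f^(3) x + 37/10 * a x * a^(1) x * f^(3) x
  + 23/10 * (a x)^2 * f^(4) x.
Definition h5 (x : R) : R :=
  /10 * (8 * (b x)^2 * f^(2) x
         + 5 * b x * (a^(1) x * f^(2) x + 7 * a x * f^(3) x)
         + a x * (14 * c x * f^(2) x + 26 * b^(1) x * f^(2) x
                  + 13 * f^(2) x * a^(2) x + 44 * a^(1) x * f^(3) x
                  + 31 * a x * f^(4) x)).
Definition h6 (x : R) : R :=
  /10 * (9 * (b x)^2 * f^(3) x
         + b x * (18 * c x * f^(2) x + 9 * b^(1) x * f^(2) x
                  + 4 * f^(2) x * a^(2) x + 15 * a^(1) x * f^(3) x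
                  + 25 * a x * f^(4) x)
         + 2 * (4 * c x * a^(1) x * f^(2) x + 10 * a x * c^(1) x * f^(2) x
                + 7 * a x * f^(2) x * b^(2) x + 16 * a x * c x * f^(3) x
                + 14 * a x * b^(1) x * f^(3) x + 12 * a x * a^(2) x * f^(3) x
                + 2 * a x * f^(2) x * a^(3) x + 18 * a x * a^(1) x * f^(4) x
                + 8 * (a x)^2 * f^(5) x)).
Definition h7 (x : R) : R :=
  /8 * (4 * (c x)^2 * f^(2) x + (b x)^2 * f^(4) x
        + 2 * c x * (b^(1) x * f^(2) x + 2 * b x * f^(3) x
                     + a^(1) x * f^(3) x + 2 * a x * f^(4) x)
        + b x * (2 * c^(1) x * f^(2) x + f^(2) x * b^(2) x
                 + 2 * b^(1) x * f^(3) x + a^(2) x * f^(3) x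
                 + 2 * a^(1) x * f^(4) x + 2 * a x * f^(5) x)
        + a x * (2 * f^(2) x * c^(2) x + 4 * c^(1) x * f^(3) x
                 + 3 * b^(2) x * f^(3) x + f^(3) x * a^(3) x
                 + f^(2) x * b^(3) x + 3 * b^(1) x * f^(4) x
                 + 3 * a^(2) x * f^(4) x + 3 * a^(1) x * f^(5) x
                 + a x * f^(6) x)).

Definition Q5 : dfun := fun j =>
  let x := j 0%nat in
  h1 x * j 5%nat + h2 x * j 4%nat * j 1%nat + h3 x * j 3%nat * j 2%nat
  + h4 x * j 3%nat * (j 1%nat)^2 + h5 x * (j 2%nat)^2 * j 1%nat
  + h6 x * j 2%nat * (j 1%nat)^3 + h7 x * (j 1%nat)^5.

Definition Ut (hbar : R) : dfun := fun j => K1 j + hbar^2 * K3 j.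
Definition Utau (hbar : R) : dfun :=
  fun j => Q1 j + hbar^2 * Q3 j + hbar^4 * Q5 j.
End Flows.

(* Main.v *)
Require Import Defs.
From Stdlib Require Import Reals Lra Lia FunctionalExtensionality.
From Coquelicot Require Import Coquelicot.
Open Scope R_scope.

Inductive ex : Type :=
| Zero | One | Var (k : nat) | Cf (g : R -> R) (k : nat) | Cst (c0 : R)
| Add (e1 e2 : ex) | Mul (e1 e2 : ex).

Fixpoint eval (e : ex) (j : jet) : R :=
  match e with
  | Zero => 0 | One => 1 | Var k => j k | Cf g k => Derive_n g k (j 0%nat)
  | Cst r => r | Add e1 e2 => eval e1 j + eval e2 j
  | Mul e1 e2 => eval e1 j * eval e2 j end.

Definition mkAdd (e1 e2 : ex) : ex :=
  match e1 with Zero => e2 | _ => match e2 with Zero => e1 | _ => Add e1 e2 end end.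
Definition mkMul (e1 e2 : ex) : ex :=
  match e1 with Zero => Zero | One => e2
  | _ => match e2 with Zero => Zero | One => e1 | _ => Mul e1 e2 end end.

Lemma eval_mkAdd e1 e2 j : eval (mkAdd e1 e2) j = eval e1 j + eval e2 j.
Proof. destruct e1, e2; simpl; ring. Qed.
Lemma eval_mkMul e1 e2 j : eval (mkMul e1 e2) j = eval e1 j * eval e2 j.
Proof. destruct e1, e2; simpl; ring. Qed.

Fixpoint dpd (r : nat) (e : ex) : ex :=
  match e with
  | Zero | One | Cst _ => Zero
  | Var k => if Nat.eqb k r then One else Zero
  | Cf g k => match r with O => Cf g (S k) | _ => Zero end
  | Add e1 e2 => mkAdd (dpd r e1) (dpd r e2)
  | Mul e1 e2 => mkAdd (mkMul (dpd r e1) e2) (mkMul e1 (dpd r e2)) end.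

Fixpoint good (e : ex) : Prop :=
  match e with
  | Cf g _ => smooth g
  | Add e1 e2 | Mul e1 e2 => good e1 /\ good e2
  | _ => True end.

Lemma good_mkAdd e1 e2 : good e1 -> good e2 -> good (mkAdd e1 e2).
Proof. destruct e1, e2; simpl; tauto. Qed.
Lemma good_mkMul e1 e2 : good e1 -> good e2 -> good (mkMul e1 e2).
Proof. destruct e1, e2; simpl; tauto. Qed.
Lemma good_dpd r e : good e -> good (dpd r e).
Proof.
  induction e; simpl; intros; try tauto.
  - destruct (Nat.eqb k r); simpl; auto.
  - destruct r; simpl; auto.
  - apply good_mkAdd; tauto.
  - apply good_mkAdd; apply good_mkMul; tauto.
Qed.

Lemma upd_same j r : upd j r (j r) = j.
Proof.
  apply functional_extensionality; intro k; unfold upd.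
  destruct (Nat.eqb_spec k r); subst; auto.
Qed.

Lemma is_derive_val (f : R -> R) (x l l' : R) : is_derive f x l -> l = l' -> is_derive f x l'.
Proof. intros H ->; exact H. Qed.

Lemma dC (c x : R) : is_derive (fun _ : R => c) x 0.
Proof. exact (is_derive_const c x). Qed.
Lemma dI (x : R) : is_derive (fun t : R => t) x 1.
Proof. exact (is_derive_id x). Qed.
Lemma dP (f g : R -> R) (x df dg : R) : is_derive f x df -> is_derive g x dg ->
  is_derive (fun t => f t + g t) x (df + dg).
Proof. intros; exact (is_derive_plus f g x df dg H H0). Qed.
Lemma dM (f g : R -> R) (x df dg : R) : is_derive f x df -> is_derive g x dg ->
  is_derive (fun t => f t * g t) x (df * g x + f x * dg).
Proof. intros; exact (is_derive_mult f g x df dg H H0 Rmult_comm). Qed.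

Lemma is_derive_eval e : good e -> forall r j,
  is_derive (fun t => eval e (upd j r t)) (j r) (eval (dpd r e) j).
Proof.
  induction e; simpl; intros Hg r j.
  - apply dC.
  - apply dC.
  - unfold upd. destruct (Nat.eqb k r); simpl.
    + apply dI.
    + apply dC.
  - destruct r as [|r]; simpl.
    + unfold upd; simpl. apply Derive_correct. apply Hg.
    + unfold upd; simpl. apply dC.
  - apply dC.
  - destruct Hg as [H1 H2]. rewrite eval_mkAdd.
    apply (dP (fun t => eval e1 (upd j r t)) (fun t => eval e2 (upd j r t))); auto.
  - destruct Hg as [H1 H2]. rewrite eval_mkAdd, !eval_mkMul.
    eapply is_derive_val.
    + apply (dM (fun t => eval e1 (upd j r t)) (fun t => eval e2 (upd j r t))); auto.
    + rewrite upd_same. reflexivity.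
Qed.

Lemma pd_eval e r j : good e -> pd r (eval e) j = eval (dpd r e) j.
Proof. intro H. apply is_derive_unique. apply is_derive_eval; auto. Qed.

Fixpoint sumE (n : nat) (F : nat -> ex) : ex :=
  match n with O => Zero | S m => mkAdd (sumE m F) (F m) end.
Lemma eval_sumE n F j : eval (sumE n F) j = sumN n (fun r => eval (F r) j).
Proof. induction n; simpl; auto. rewrite eval_mkAdd, IHn; auto. Qed.

Definition dtot (m : nat) (e : ex) : ex :=
  sumE m (fun r => mkMul (Var (S r)) (dpd r e)).

Lemma good_sumE n F : (forall r, good (F r)) -> good (sumE n F).
Proof. induction n; simpl; intros; auto. apply good_mkAdd; auto. Qed.
Lemma good_dtot m e : good e -> good (dtot m e).
Proof. intros; apply good_sumE; intros; apply good_mkMul; simpl; auto using good_dpd. Qed.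

Lemma Dtot_evalN N e j : good e -> Dtot N (eval e) j = eval (dtot N e) j.
Proof.
  intro H. unfold Dtot, dtot. rewrite eval_sumE.
  induction N; cbn [sumN]; auto. rewrite IHN, eval_mkMul, pd_eval; auto.
Qed.

Fixpoint vb (m : nat) (e : ex) : bool :=
  match e with
  | Var k => Nat.ltb k m | Cf _ _ => Nat.ltb 0 m
  | Add e1 e2 | Mul e1 e2 => vb m e1 && vb m e2
  | _ => true end.

Lemma dpd_vb m e j : vb m e = true -> forall r, (m <= r)%nat -> eval (dpd r e) j = 0.
Proof.
  induction e; simpl; intros H r Hr; auto.
  - apply Nat.ltb_lt in H. destruct (Nat.eqb_spec k r); [lia|reflexivity].
  - apply Nat.ltb_lt in H. destruct r; [lia|reflexivity].
  - apply andb_prop in H; destruct H. rewrite eval_mkAdd, IHe1, IHe2; auto; ring.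
  - apply andb_prop in H; destruct H. rewrite eval_mkAdd, !eval_mkMul, IHe1, IHe2; auto; ring.
Qed.

Lemma sumN_trunc m N F : (forall r, (m <= r)%nat -> F r = 0) -> (m <= N)%nat ->
  sumN N F = sumN m F.
Proof.
  intros H HN. induction N; simpl.
  - assert (m = 0%nat) by lia; subst; reflexivity.
  - destruct (Nat.eq_dec m (S N)) as [->|Hne]; [reflexivity|].
    rewrite IHN by lia. rewrite H by lia. ring.
Qed.

Lemma Dtot_eval_b N m e : good e -> vb m e = true -> (m <= N)%nat ->
  Dtot N (eval e) = eval (dtot m e).
Proof.
  intros H Hv HN. apply functional_extensionality; intro j.
  rewrite Dtot_evalN by auto. unfold dtot. rewrite !eval_sumE.
  apply sumN_trunc; auto. intros r Hr. rewrite eval_mkMul, (dpd_vb m); auto. ring.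
Qed.

Lemma vb_mono m m' e : vb m e = true -> (m <= m')%nat -> vb m' e = true.
Proof.
  induction e; simpl; intros H Hm; auto.
  - apply Nat.ltb_lt in H; apply Nat.ltb_lt; lia.
  - apply Nat.ltb_lt in H; apply Nat.ltb_lt; lia.
  - apply andb_prop in H; destruct H. rewrite IHe1, IHe2; auto.
  - apply andb_prop in H; destruct H. rewrite IHe1, IHe2; auto.
Qed.
Lemma vb_mkAdd m e1 e2 : vb m e1 = true -> vb m e2 = true -> vb m (mkAdd e1 e2) = true.
Proof. destruct e1, e2; simpl; intros; rewrite ?H, ?H0; auto. Qed.
Lemma vb_mkMul m e1 e2 : vb m e1 = true -> vb m e2 = true -> vb m (mkMul e1 e2) = true.
Proof. destruct e1, e2; simpl; intros; rewrite ?H, ?H0; auto. Qed.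
Lemma vb_dpd m r e : vb m e = true -> vb m (dpd r e) = true.
Proof.
  induction e; simpl; intros H; auto.
  - destruct (Nat.eqb k r); auto.
  - destruct r; auto.
  - apply andb_prop in H; destruct H. apply vb_mkAdd; auto.
  - apply andb_prop in H; destruct H. apply vb_mkAdd; apply vb_mkMul; simpl; auto.
Qed.
Lemma vb_sumE M n F : (forall r, (r < n)%nat -> vb M (F r) = true) -> vb M (sumE n F) = true.
Proof. induction n; simpl; intros; auto. apply vb_mkAdd; auto. Qed.
Lemma vb_dtot m e : vb m e = true -> vb (S m) (dtot m e) = true.
Proof.
  intros H. apply vb_sumE; intros r Hr. apply vb_mkMul.
  - simpl; apply Nat.ltb_lt; lia.
  - apply vb_dpd. apply (vb_mono m); auto.
Qed.

Fixpoint iterB (m r : nat) (e : ex) : ex :=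
  match r with O => e | S r' => dtot (m + r') (iterB m r' e) end.

Lemma iterB_props m r e : good e -> vb m e = true ->
  good (iterB m r e) /\ vb (m + r) (iterB m r e) = true.
Proof.
  intros H Hv. induction r; simpl.
  - rewrite Nat.add_0_r; auto.
  - destruct IHr. split; [apply good_dtot; auto|].
    rewrite <- plus_n_Sm. apply vb_dtot; auto.
Qed.

Lemma Diter_eval N m r e : good e -> vb m e = true -> (m + r <= S N)%nat ->
  Diter N r (eval e) = eval (iterB m r e).
Proof.
  intros H Hv. induction r; simpl; intros Hr; auto.
  rewrite IHr by lia. destruct (iterB_props m r e H Hv).
  apply Dtot_eval_b; auto. lia.
Qed.

Lemma sumN_ext_lt n F G : (forall r, (r < n)%nat -> F r = G r) -> sumN n F = sumN n G.
Proof. intros H; induction n; simpl; auto. rewrite IHn, H; auto. Qed.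

Definition fr (mp mv : nat) (P V : ex) : ex :=
  sumE mp (fun r => mkMul (dpd r P) (iterB mv r V)).

Lemma frechet_eval N mp mv P V j : good P -> vb mp P = true -> good V -> vb mv V = true ->
  (mv + mp <= S (S N))%nat -> (mp <= N)%nat ->
  frechet N (eval P) (eval V) j = eval (fr mp mv P V) j.
Proof.
  intros. unfold frechet, fr. rewrite eval_sumE.
  rewrite (sumN_trunc mp N).
  - apply sumN_ext_lt. intros r Hr.
    rewrite eval_mkMul, pd_eval by auto. rewrite (Diter_eval N mv) by (auto; lia). reflexivity.
  - intros r Hr. rewrite pd_eval, (dpd_vb mp) by auto. ring.
  - auto.
Qed.

Fixpoint iterN (N r : nat) (e : ex) : ex :=
  match r with O => e | S r' => dtot N (iterN N r' e) end.
Lemma good_iterN N r e : good e -> good (iterN N r e).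
Proof. induction r; simpl; auto using good_dtot. Qed.
Lemma Diter_evalN N r e : good e -> Diter N r (eval e) = eval (iterN N r e).
Proof.
  intro H. induction r; simpl; auto. rewrite IHr.
  apply functional_extensionality; intro j. apply Dtot_evalN, good_iterN; auto.
Qed.

Lemma sumN_lin n F G k1 k2 : sumN n (fun r => k1 * F r + k2 * G r) = k1 * sumN n F + k2 * sumN n G.
Proof. induction n; simpl; [ring|]. rewrite IHn; ring. Qed.
Lemma sumN_ext n F G : (forall r, F r = G r) -> sumN n F = sumN n G.
Proof. intros H; induction n; simpl; auto. rewrite IHn, H; auto. Qed.

Lemma dtot_lin N e1 e2 e3 k1 k2 : good e1 -> good e2 -> good e3 ->
  (forall j, eval e3 j = k1 * eval e1 j + k2 * eval e2 j) ->
  forall j, eval (dtot N e3) j = k1 * eval (dtot N e1) j + k2 * eval (dtot N e2) j.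
Proof.
  intros G1 G2 G3 H j.
  assert (E : eval e3 = eval (Add (Mul (Cst k1) e1) (Mul (Cst k2) e2))).
  { apply functional_extensionality; intro; simpl; auto. }
  rewrite <- !Dtot_evalN by auto. rewrite E.
  rewrite Dtot_evalN by (simpl; tauto). rewrite !Dtot_evalN by auto.
  unfold dtot. rewrite !eval_sumE, <- sumN_lin. apply sumN_ext; intro r.
  rewrite !eval_mkMul. cbn [dpd].
  repeat (rewrite ?eval_mkMul, ?eval_mkAdd; cbn [eval dpd]). ring.
Qed.

Lemma iterN_lin N r e1 e2 e3 k1 k2 : good e1 -> good e2 -> good e3 ->
  (forall j, eval e3 j = k1 * eval e1 j + k2 * eval e2 j) ->
  forall j, eval (iterN N r e3) j = k1 * eval (iterN N r e1) j + k2 * eval (iterN N r e2) j.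
Proof.
  intros G1 G2 G3 H. induction r; intro j; simpl; auto.
  apply dtot_lin; auto using good_iterN.
Qed.

Lemma frechet_lin2 N P e1 e2 e3 k1 k2 j : good e1 -> good e2 -> good e3 ->
  (forall j, eval e3 j = k1 * eval e1 j + k2 * eval e2 j) ->
  frechet N P (eval e3) j = k1 * frechet N P (eval e1) j + k2 * frechet N P (eval e2) j.
Proof.
  intros. unfold frechet. rewrite <- sumN_lin. apply sumN_ext; intro r.
  rewrite !Diter_evalN by auto. rewrite (iterN_lin N r e1 e2 e3 k1 k2) by auto. ring.
Qed.

Lemma frechet_lin1 N V e1 e2 e3 k1 k2 j : good e1 -> good e2 -> good e3 ->
  (forall j, eval e3 j = k1 * eval e1 j + k2 * eval e2 j) ->
  frechet N (eval e3) V j = k1 * frechet N (eval e1) V j + k2 * frechet N (eval e2) V j.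
Proof.
  intros G1 G2 G3 H.
  assert (E : eval e3 = eval (Add (Mul (Cst k1) e1) (Mul (Cst k2) e2))).
  { apply functional_extensionality; intro; simpl; auto. }
  unfold frechet. rewrite <- sumN_lin. apply sumN_ext; intro r.
  rewrite E, !pd_eval by (simpl; tauto). cbn [dpd].
  repeat (rewrite ?eval_mkMul, ?eval_mkAdd; cbn [eval dpd]). ring.
Qed.

Section C.
Variables a b c f : R -> R.
Declare Scope ex_scope. Delimit Scope ex_scope with X.
Infix "+" := Add : ex_scope. Infix "*" := Mul : ex_scope.
Local Notation A k := (Cf a k). Local Notation B k := (Cf b k).
Local Notation C k := (Cf c k). Local Notation F k := (Cf f k).
Local Notation u k := (Var k).
Local Notation "# x" := (Cst x%R) (at level 1).
Open Scope ex_scope.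

Definition K1e := u 0 * u 1.
Definition K3e := A 0 * u 3 + B 0 * u 2 * u 1 + C 0 * (u 1 * u 1 * u 1).
Definition Q1e := F 0 * u 1.
Definition Q3e := A 0 * F 1 * u 3 + (B 0 * F 1 + #2 * A 0 * F 2) * u 2 * u 1
  + (C 0 * F 1 + #(/2) * B 0 * F 2 + #(/2) * A 0 * F 3) * (u 1 * u 1 * u 1).
Definition h1e := #(3/5) * (A 0 * A 0) * F 2.
Definition h2e := A 0 * B 0 * F 2 + #(8/5) * A 0 * A 1 * F 2 + #(9/5) * (A 0 * A 0) * F 3.
Definition h3e := #2 * A 0 * B 0 * F 2 + #2 * A 0 * A 1 * F 2 + #3 * (A 0 * A 0) * F 3.
Definition h4e := #(2/5) * (B 0 * B 0) * F 2 + #(11/5) * A 0 * C 0 * F 2 + B 0 * A 1 * F 2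
  + #(13/10) * A 0 * B 1 * F 2 + #(7/5) * A 0 * F 2 * A 2
  + #(5/2) * A 0 * B 0 * F 3 + #(37/10) * A 0 * A 1 * F 3
  + #(23/10) * (A 0 * A 0) * F 4.
Definition h5e := #(/10) * (#8 * (B 0 * B 0) * F 2
         + #5 * B 0 * (A 1 * F 2 + #7 * A 0 * F 3)
         + A 0 * (#14 * C 0 * F 2 + #26 * B 1 * F 2
                  + #13 * F 2 * A 2 + #44 * A 1 * F 3
                  + #31 * A 0 * F 4)).
Definition h6e := #(/10) * (#9 * (B 0 * B 0) * F 3
         + B 0 * (#18 * C 0 * F 2 + #9 * B 1 * F 2
                  + #4 * F 2 * A 2 + #15 * A 1 * F 3
                  + #25 * A 0 * F 4)
         + #2 * (#4 * C 0 * A 1 * F 2 + #10 * A 0 * C 1 * F 2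
                + #7 * A 0 * F 2 * B 2 + #16 * A 0 * C 0 * F 3
                + #14 * A 0 * B 1 * F 3 + #12 * A 0 * A 2 * F 3
                + #2 * A 0 * F 2 * A 3 + #18 * A 0 * A 1 * F 4
                + #8 * (A 0 * A 0) * F 5)).
Definition h7e := #(/8) * (#4 * (C 0 * C 0) * F 2 + (B 0 * B 0) * F 4
        + #2 * C 0 * (B 1 * F 2 + #2 * B 0 * F 3
                     + A 1 * F 3 + #2 * A 0 * F 4)
        + B 0 * (#2 * C 1 * F 2 + F 2 * B 2
                 + #2 * B 1 * F 3 + A 2 * F 3
                 + #2 * A 1 * F 4 + #2 * A 0 * F 5)
        + A 0 * (#2 * F 2 * C 2 + #4 * C 1 * F 3
                 + #3 * B 2 * F 3 + F 3 * A 3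
                 + F 2 * B 3 + #3 * B 1 * F 4
                 + #3 * A 2 * F 4 + #3 * A 1 * F 5
                 + A 0 * F 6)).
Definition Q5e :=
  h1e * u 5 + h2e * u 4 * u 1 + h3e * u 3 * u 2
  + h4e * u 3 * (u 1 * u 1) + h5e * (u 2 * u 2) * u 1
  + h6e * u 2 * (u 1 * u 1 * u 1) + h7e * (u 1 * u 1 * u 1 * u 1 * u 1).
Close Scope ex_scope.

Lemma eK1 : K1 = eval K1e.
Proof. apply functional_extensionality; intro j; reflexivity. Qed.
Lemma eK3 : K3 a b c = eval K3e.
Proof. apply functional_extensionality; intro j; unfold K3; simpl; ring. Qed.
Lemma eQ1 : Q1 f = eval Q1e.
Proof. apply functional_extensionality; intro j; reflexivity. Qed.
Lemma eQ3 : Q3 a b c f = eval Q3e.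
Proof. apply functional_extensionality; intro j; unfold Q3; simpl; ring. Qed.
Lemma eQ5 : Q5 a b c f = eval Q5e.
Proof. apply functional_extensionality; intro j; unfold Q5, h1, h2, h3, h4, h5, h6, h7; simpl; ring. Qed.

Hypotheses (Ha : smooth a) (Hb : smooth b) (Hc : smooth c) (Hf : smooth f).

Ltac crunch := cbv [eval fr sumE dpd iterB dtot mkAdd mkMul Nat.eqb Nat.add
   K1e K3e Q1e Q3e Q5e h1e h2e h3e h4e h5e h6e h7e].

Lemma part1 N j : (6 <= N)%nat ->
  frechet N K1 (Q5 a b c f) j - frechet N (Q5 a b c f) K1 j
  = frechet N (Q3 a b c f) (K3 a b c) j - frechet N (K3 a b c) (Q3 a b c f) j.
Proof.
  intro HN. rewrite eK1, eK3, eQ3, eQ5.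
  rewrite (frechet_eval N 2 6), (frechet_eval N 6 2), (frechet_eval N 4 4 Q3e),
    (frechet_eval N 4 4 K3e) by (reflexivity || lia || (simpl; tauto)).
  crunch. field. Qed.

Lemma low0 N j : (6 <= N)%nat -> frechet N K1 (Q1 f) j = frechet N (Q1 f) K1 j.
Proof.
  intro HN. rewrite eK1, eQ1.
  rewrite (frechet_eval N 2 2 K1e), (frechet_eval N 2 2 Q1e)
    by (reflexivity || lia || (simpl; tauto)).
  crunch. field.
Qed.

Lemma low2 N j : (6 <= N)%nat ->
  frechet N K1 (Q3 a b c f) j + frechet N (K3 a b c) (Q1 f) j
  = frechet N (Q1 f) (K3 a b c) j + frechet N (Q3 a b c f) K1 j.
Proof.
  intro HN. rewrite eK1, eQ1, eK3, eQ3.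
  rewrite (frechet_eval N 2 4 K1e), (frechet_eval N 4 2 K3e), (frechet_eval N 2 4 Q1e),
    (frechet_eval N 4 2 Q3e) by (reflexivity || lia || (simpl; tauto)).
  crunch. field.
Qed.

Lemma part2 N : (6 <= N)%nat ->
  exists Rem : dfun, forall (hbar : R) (j : jet),
       bracket N (Ut a b c hbar) (Utau a b c f hbar) j = hbar ^ 6 * Rem j.
Proof.
  intro HN. exists (fun j => bracket N (K3 a b c) (Q5 a b c f) j).
  intros hbar j.
  pose proof (part1 N j HN) as P1. pose proof (low0 N j HN) as P0.
  pose proof (low2 N j HN) as P2.
  rewrite eK1, eK3, eQ1, eQ3, eQ5 in *.
  set (UtE := Add K1e (Mul (Cst (hbar^2)) K3e)).
  set (U13 := Add Q1e (Mul (Cst (hbar^2)) Q3e)).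
  set (UtauE := Add U13 (Mul (Cst (hbar^4)) Q5e)).
  assert (GK1 : good K1e) by (simpl; tauto).
  assert (GK3 : good K3e) by (simpl; tauto).
  assert (GQ1 : good Q1e) by (simpl; tauto).
  assert (GQ3 : good Q3e) by (simpl; tauto).
  assert (GQ5 : good Q5e) by (simpl; tauto).
  assert (GU : good UtE) by (simpl; tauto).
  assert (GU13 : good U13) by (simpl; tauto).
  assert (GUt : good UtauE) by (simpl; tauto).
  assert (EU : Ut a b c hbar = eval UtE).
  { apply functional_extensionality; intro k. unfold Ut. rewrite eK1, eK3. reflexivity. }
  assert (EUt : Utau a b c f hbar = eval UtauE).
  { apply functional_extensionality; intro k. unfold Utau. rewrite eQ1, eQ3, eQ5. reflexivity. }
  unfold bracket. rewrite EU, EUt.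
  assert (L1 : forall e, eval UtE e = 1 * eval K1e e + hbar^2 * eval K3e e)
    by (intro; simpl; ring).
  assert (L2 : forall e, eval UtauE e = 1 * eval U13 e + hbar^4 * eval Q5e e)
    by (intro; simpl; ring).
  assert (L3 : forall e, eval U13 e = 1 * eval Q1e e + hbar^2 * eval Q3e e)
    by (intro; simpl; ring).
  rewrite (frechet_lin1 N _ K1e K3e UtE 1 (hbar^2) j GK1 GK3 GU L1).
  rewrite (frechet_lin1 N _ U13 Q5e UtauE 1 (hbar^4) j GU13 GQ5 GUt L2).
  rewrite (frechet_lin1 N _ Q1e Q3e U13 1 (hbar^2) j GQ1 GQ3 GU13 L3).
  rewrite !(frechet_lin2 N _ U13 Q5e UtauE 1 (hbar^4) j GU13 GQ5 GUt L2).
  rewrite !(frechet_lin2 N _ Q1e Q3e U13 1 (hbar^2) j GQ1 GQ3 GU13 L3).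
  rewrite !(frechet_lin2 N _ K1e K3e UtE 1 (hbar^2) j GK1 GK3 GU L1).
  unfold bracket.
  assert (E1 : frechet N (eval K1e) (eval Q5e) j = frechet N (eval Q5e) (eval K1e) j
     + frechet N (eval Q3e) (eval K3e) j - frechet N (eval K3e) (eval Q3e) j) by lra.
  assert (E2 : frechet N (eval K1e) (eval Q3e) j = frechet N (eval Q1e) (eval K3e) j
     + frechet N (eval Q3e) (eval K1e) j - frechet N (eval K3e) (eval Q1e) j) by lra.
  rewrite E1, E2, P0. ring.
Qed.
End C.

Theorem mainTheorem3 (a b c f : R -> R) :
  smooth a -> smooth b -> smooth c -> smooth f ->
  forall N : nat, (6 <= N)%nat ->
    (forall j : jet,
       frechet N K1 (Q5 a b c f) j - frechet N (Q5 a b c f) K1 j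
       = frechet N (Q3 a b c f) (K3 a b c) j - frechet N (K3 a b c) (Q3 a b c f) j)
    /\
    (exists Rem : dfun, forall (hbar : R) (j : jet),
       bracket N (Ut a b c hbar) (Utau a b c f hbar) j = hbar ^ 6 * Rem j).
Proof.
  intros Ha Hb Hc Hf N HN. split.
  - intro j. apply part1; auto.
  - apply part2; auto.
Qed.
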